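(* Let $S$ be a finite semigroup satisfying the quasi-identities $$\forall a\,\forall b\,\forall \alpha\,\forall\beta\ \big((a\alpha=a\beta)\to(b\alpha=b\beta)\big),\qquad \forall a\,\forall b\,\forall \alpha\,\forall\beta\ \big((\alpha a=\beta a)\to(\alpha b=\beta b)\big).$$ Then $\mathrm{Ker}(S)=\mathrm{Red}(S)$, i.e. the kernel of $S$ is exactly the set of reducible elements of $S$.
   Context: The kernel $\mathrm{Ker}(S)$ of a finite semigroup $S$ is its (unique) minimal two-sided ideal. An element $s\in S$ is reducible if $s=ab$ for some $a,b\in S$; $\mathrm{Red}(S)$ is the set of reducible elements. *)

(* Defs.v *)
From mathcomp Require Import all_boot.
Set Implicit Arguments. Unset Strict Implicit. Unset Printing Implicit Defensive.

Definition associative_op (T : Type) (op : T -> T -> T) :=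
  forall x y z, op x (op y z) = op (op x y) z.

Definition is_ideal (T : finType) (op : T -> T -> T) (I : {set T}) :=
  I != set0 /\ (forall s x, x \in I -> op s x \in I) /\
  (forall s x, x \in I -> op x s \in I).

Definition is_kernel (T : finType) (op : T -> T -> T) (K : {set T}) :=
  is_ideal op K /\ (forall J, is_ideal op J -> J \subset K -> J = K).

Definition Red (T : finType) (op : T -> T -> T) : {set T} :=
  [set s | [exists a, exists b, op a b == s]].

(* Main.v *)
Require Import Defs.
From mathcomp Require Import all_boot.

Section S.
Variables (T : finType) (op : T -> T -> T).
Hypothesis assoc : associative_op op.
Hypothesis qright : forall a b al be, op al a = op be a -> op al b = op be b.

Lemma iter_op j d x : iter d.+1 (op j) x = op (iter d (op j) j) x.
Proof.
elim: d x => [|d IH] x //=.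
by rewrite -/(iter d.+1 (op j) x) IH assoc.
Qed.

Lemma key (J : {set T}) : is_ideal op J -> Red op \subset J.
Proof.
move=> [/set0Pn [j jJ] [HL HR]].
have pJ : forall n, iter n (op j) j \in J.
  by elim=> [|n IH] //=; apply: HL.
pose f := fun i : 'I_(#|T|.+1) => iter i (op j) j.
have : ~~ injectiveb f.
  apply/negP => /injectiveP inj.
  by have := leq_card _ inj; rewrite card_ord ltnn.
case/injectivePn => x [y] nxy fxy.
have [m [d e]] : exists m d, iter m (op j) j = iter (d.+1 + m) (op j) j.
  case: (ltngtP x y) => [lt|lt|eq]; last by move: nxy; rewrite (val_inj eq) eqxx.
  - exists x, (y - x).-1; rewrite prednK ?subn_gt0 // subnK ?(ltnW lt) //.
  - exists y, (x - y).-1; rewrite prednK ?subn_gt0 // subnK ?(ltnW lt) //.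
set c := iter d (op j) j.
have cm : op c (iter m (op j) j) = iter m (op j) j.
  by rewrite -iter_op -iterD.
apply/subsetP => s; rewrite inE => /existsP [a /existsP [b /eqP <-]].
have E : op (op a c) (iter m (op j) j) = op a (iter m (op j) j).
  by rewrite -assoc cm.
rewrite -(@qright _ b _ _ E) -assoc.
by apply: HL; apply: HR; apply: pJ.
Qed.
End S.

Theorem lemma3 (T : finType) (op : T -> T -> T) (x0 : T)
  (assoc : associative_op op)
  (qleft : forall a b al be, op a al = op a be -> op b al = op b be)
  (qright : forall a b al be, op al a = op be a -> op al b = op be b) :
  is_kernel op (Red op) /\ (forall K, is_kernel op K -> K = Red op).
Proof.
have RI : is_ideal op (Red op).
  split; first by apply/set0Pn; exists (op x0 x0); rewrite inE; apply/existsP; exists x0; apply/existsP; exists x0.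
  split=> s x; rewrite !inE => /existsP [a /existsP [b /eqP <-]]; apply/existsP.
  - by exists (op s a); apply/existsP; exists b; rewrite assoc.
  - by exists a; apply/existsP; exists (op b s); rewrite assoc.
have K := @key T op assoc qright.
split.
  split=> // J IJ sub; apply/eqP; rewrite eqEsubset sub; exact: K.
move=> J [IJ min]; apply: esym; apply: min => //; exact: K.
Qed.
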